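(* Let $M$ be a manifold with a Riemannian metric $g$ and a closed $3$-form $H$. Let $D\subset TM\oplus T^\ast M$ be a Dirac structure for the $H$-twisted standard Courant algebroid, and let $\rho\colon D\to TM$ and $\theta\colon D\to T^\ast M$ be vector bundle maps such that $\rho\oplus\theta\colon D\to TM\oplus T^\ast M$ maps $D$ isomorphically onto a Dirac structure $\widetilde D$ of the same $H$-twisted Courant algebroid. Let $\theta^\ast:=g^{-1}\circ\theta\colon D\to TM$. Then the bundle maps $\theta^\ast\pm\rho\colon D\to TM$ are invertible. Choose a local frame $(e_a)$ of $D$ and local coordinates $(x^i)$ on $M$, write $\rho_a=\rho(e_a)=\rho^i_a\partial_i$, $\theta_a=\theta(e_a)=\theta_{ai}\,\mathrm dx^i$, $(\theta^\ast)^k{}_a=g^{kj}\theta_{aj}$, and $H^k{}_{li}=g^{km}H_{mli}$. Define $$T^a_{bi}=[(\theta^\ast+\rho)^{-1}]^a{}_k\Big(\mathring\nabla_i(\theta^\ast+\rho)^k{}_b-\tfrac12\rho^l_b H^k{}_{li}\Big),$$ $$\phi^a_{bi}=[(\theta^\ast-\rho)^{-1}]^a{}_k\Big(\mathring\nabla_i\rho^k_b-\rho^k_cT^c_{bi}\Big),\qquad \omega^a_{bi}=\Gamma^a_{bi}-\phi^a_{bi}+T^a_{bi},$$ and the local $1$-forms $\omega^b_a=\omega^b_{ai}\,\mathrm dx^i$, $\phi^b_a=\phi^b_{ai}\,\mathrm dx^i$. Then for every $a$, $$\mathcal L_{\rho_a}g=\omega^b_a\vee\iota_{\rho_b}g+\phi^b_a\vee\theta_b,\qquad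 \iota_{\rho_a}H=\mathrm d\theta_a-\omega^b_a\wedge\theta_b-\phi^b_a\wedge\iota_{\rho_b}g .$$ Equivalently, the connections $\nabla^\pm=\nabla^\omega\pm\phi$ on $D$ (where $\nabla^\omega e_a=\omega^b_a\otimes e_b$) are $\nabla^+=\nabla^{LC}+T$ and $\nabla^-=\nabla^{LC}+T-2\,\iota_{(\mathring\nabla-T)(\rho)}(\theta^\ast-\rho)^{-1}$.
   Context: The $H$-twisted standard Courant algebroid on $TM\oplus T^\ast M$ has pairing $\langle v+\eta,v'+\eta'\rangle=\iota_v\eta'+\iota_{v'}\eta$ and bracket $[v+\eta,v'+\eta']=[v,v']+\mathcal L_v\eta'-\mathcal L_{v'}\eta-\tfrac12\mathrm d(\iota_v\eta'-\iota_{v'}\eta)-\iota_v\iota_{v'}H$. A Dirac structure is a subbundle of rank $\dim M$ that is isotropic for the pairing and whose sections are closed under the bracket. Every Dirac structure $D$ is of the form $\{(\mathrm{id}-\mathcal O)\mathfrak a\oplus g((\mathrm{id}+\mathcal O)\mathfrak a):\mathfrak a\in TM\}$ for a unique $g$-orthogonal endomorphism $\mathcal O$ of $TM$, so $v\oplus\eta\mapsto\tfrac12(v+g^{-1}\eta)$ is an isomorphism $D\cong TM$. $\nabla^{LC}$ denotes the connection on $D$ obtained from the Levi-Civita connection of $g$ through this isomorphism, with coefficients $\nabla^{LC}e_b=\Gamma^a_{bi}\,\mathrm dx^i\otimes e_a$; $\mathring\nabla$ denotes the covariant derivative on sections of $D^\ast\otimes TM$ built from the Levi-Civita connection of $g$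 on $TM$ and $\nabla^{LC}$ on $D$ (so $\mathring\nabla_i\rho^k_b=\partial_i\rho^k_b+\Gamma^k_{il}\rho^l_b-\Gamma^c_{bi}\rho^k_c$, with $\Gamma^k_{il}$ the Christoffel symbols of $g$). For $1$-forms, $\alpha\vee\beta=\alpha\otimes\beta+\beta\otimes\alpha$ and $\alpha\wedge\beta=\alpha\otimes\beta-\beta\otimes\alpha$; $\iota_{\rho_b}g=g(\rho_b,\cdot)$. In the last formula, $T$ and $(\theta^\ast-\rho)^{-1}$ are viewed as sections of $T^\ast M\otimes D^\ast\otimes D$ (via $T^b_{ai}$) and $T^\ast M\otimes D$, $(\mathring\nabla-T)(\rho)$ has components $\mathring\nabla_i\rho^k_b-\rho^k_cT^c_{bi}$, and the contraction is over the single $TM$ and $T^\ast M$ indices. *)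

(* Defs.v *)
(* Local (chart-level) tensor calculus on an open
   subset U of R^n, with points in 'rV[R]_n. *)
From HB Require Import structures.
From mathcomp Require Import all_boot all_order all_algebra.
From mathcomp Require Import all_classical all_reals all_analysis.
Set Implicit Arguments. Unset Strict Implicit. Unset Printing Implicit Defensive.
Import Order.TTheory GRing.Theory Num.Theory.
Import numFieldNormedType.Exports.
Local Open Scope classical_set_scope.
Local Open Scope ring_scope.

Section LocalGeometry.
Context {R : realType} {n : nat}.
Local Notation pt := 'rV[R]_n.
Local Notation idx := 'I_n.

Definition pd (i : idx) (f : pt -> R) : pt -> R :=
  fun x => 'D_(delta_mx 0 i) f x.

Definition iter_pd (l : seq idx) (f : pt -> R) : pt -> R := foldr pd f l.

Definition smooth_on (U : set pt) (f : pt -> R) : Prop :=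
  forall (l : seq idx) (x : pt), U x -> differentiable (iter_pd l f) x.

Definition gmx (g : idx -> idx -> pt -> R) (x : pt) : 'M[R]_n :=
  \matrix_(i, j) g i j x.
Definition ginv (g : idx -> idx -> pt -> R) (k l : idx) (x : pt) : R :=
  invmx (gmx g x) k l.

Definition riemannian_on (U : set pt) (g : idx -> idx -> pt -> R) : Prop :=
  (forall i j, smooth_on U (g i j)) /\
  (forall x, U x -> forall i j, g i j x = g j i x) /\
  (forall x, U x -> forall v : 'rV[R]_n, v != 0 ->
       0 < \sum_(i < n) \sum_(j < n) v 0 i * g i j x * v 0 j).

Definition christoffel (g : idx -> idx -> pt -> R) (k i j : idx) (x : pt) : R :=
  2^-1 * \sum_(m < n) ginv g k m x *
          (pd i (g m j) x + pd j (g m i) x - pd m (g i j) x).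

(** a closed 3-form H with components H_{ijk} = H(d_i,d_j,d_k) *)
Definition closed_three_form_on (U : set pt) (H : idx -> idx -> idx -> pt -> R) : Prop :=
  (forall i j k, smooth_on U (H i j k)) /\
  (forall x, U x -> forall i j k, H i j k x = - H j i k x) /\
  (forall x, U x -> forall i j k, H i j k x = - H i k j x) /\
  (forall x, U x -> forall i j k l,
      pd i (H j k l) x - pd j (H i k l) x + pd k (H i j l) x - pd l (H i j k) x = 0).

(** H-twisted Courant bracket of sections v+eta, v'+eta' of TM (+) T*M
    (components v^k, eta_j); vector part and form part *)
Definition courant_vec (v v' : idx -> pt -> R) (k : idx) (x : pt) : R :=
  \sum_(i < n) (v i x * pd i (v' k) x - v' i x * pd i (v k) x).

Definition courant_form (H : idx -> idx -> idx -> pt -> R)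
    (v eta v' eta' : idx -> pt -> R) (j : idx) (x : pt) : R :=
  (* L_v eta' *)
  \sum_(i < n) (v i x * pd i (eta' j) x + eta' i x * pd j (v i) x)
  (* - L_v' eta *)
  - \sum_(i < n) (v' i x * pd i (eta j) x + eta i x * pd j (v' i) x)
  (* - 1/2 d(i_v eta' - i_v' eta) *)
  - 2^-1 * pd j (fun y => \sum_(i < n) (v i y * eta' i y - v' i y * eta i y)) x
  (* - i_v i_v' H = - H(v', v, .) *)
  - \sum_(i < n) \sum_(l < n) v' i x * v l x * H i l j x.

(** section sum_a f^a e_a of a subbundle with frame e_a = (fv a, feta a) *)
Definition comb (f : idx -> pt -> R) (fr : idx -> idx -> pt -> R) (i : idx) (x : pt) : R :=
  \sum_(a < n) f a x * fr a i x.

Definition in_span (fv feta : idx -> idx -> pt -> R) (x : pt) (w xi : idx -> R) : Prop :=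
  exists c : idx -> R,
    (forall i, w i = \sum_(a < n) c a * fv a i x) /\
    (forall i, xi i = \sum_(a < n) c a * feta a i x).

(** The smooth frame e_a = (fv a) + (feta a), a < n, spans (over U) a Dirac
    structure of the H-twisted standard Courant algebroid: rank n (pointwise
    linearly independent), isotropic, and its smooth sections are closed
    under the bracket. *)
Definition dirac_frame (U : set pt) (H : idx -> idx -> idx -> pt -> R)
    (fv feta : idx -> idx -> pt -> R) : Prop :=
  (forall a i, smooth_on U (fv a i) /\ smooth_on U (feta a i)) /\
  (forall x, U x -> forall c : idx -> R,
      (forall i, \sum_(a < n) c a * fv a i x = 0) ->
      (forall i, \sum_(a < n) c a * feta a i x = 0) -> forall a, c a = 0) /\
  (forall x, U x -> forall a b,
      \sum_(i < n) (fv a i x * feta b i x + fv b i x * feta a i x) = 0) /\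
  (forall f h : idx -> pt -> R,
      (forall a, smooth_on U (f a)) -> (forall a, smooth_on U (h a)) ->
      forall x, U x ->
        in_span fv feta x
          (fun k => courant_vec (comb f fv) (comb h fv) k x)
          (fun j => courant_form H (comb f fv) (comb f feta) (comb h fv) (comb h feta) j x)).

(** Variables: g metric, H 3-form, (fv, feta) frame of D,
    rho a k = rho^k_a, theta a k = theta_{ak}. *)

(** image of e_a under the isomorphism D ~ TM, v+eta |-> (v + g^{-1} eta)/2 *)
Definition Ecomp (g : idx -> idx -> pt -> R) (fv feta : idx -> idx -> pt -> R)
    (a k : idx) (x : pt) : R :=
  2^-1 * (fv a k x + \sum_(j < n) ginv g k j x * feta a j x).

Definition Emx g fv feta (x : pt) : 'M[R]_n := \matrix_(k, a) Ecomp g fv feta a k x.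

(** coefficients Gamma^a_{bi} of nabla^LC on D: nabla^LC e_b = Gamma^a_{bi} dx^i (x) e_a *)
Definition GammaD g fv feta (a b i : idx) (x : pt) : R :=
  \sum_(k < n) invmx (Emx g fv feta x) a k *
    (pd i (Ecomp g fv feta b k) x
     + \sum_(l < n) christoffel g k i l x * Ecomp g fv feta b l x).

(** nabla-ring on sections A of D^* (x) TM with components A k b = A^k_b *)
Definition nablaring g fv feta (A : idx -> idx -> pt -> R) (i k b : idx) (x : pt) : R :=
  pd i (A k b) x + \sum_(l < n) christoffel g k i l x * A l b x
  - \sum_(c < n) GammaD g fv feta c b i x * A k c x.

Definition thetastar g (theta : idx -> idx -> pt -> R) (k a : idx) (x : pt) : R :=
  \sum_(j < n) ginv g k j x * theta a j x.

Definition tsp_mx g (rho theta : idx -> idx -> pt -> R) (x : pt) : 'M[R]_n :=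
  \matrix_(k, a) (thetastar g theta k a x + rho a k x).
Definition tsm_mx g (rho theta : idx -> idx -> pt -> R) (x : pt) : 'M[R]_n :=
  \matrix_(k, a) (thetastar g theta k a x - rho a k x).

Definition Hup g (H : idx -> idx -> idx -> pt -> R) (k l i : idx) (x : pt) : R :=
  \sum_(m < n) ginv g k m x * H m l i x.

Definition Tcoef g H fv feta rho theta (a b i : idx) (x : pt) : R :=
  \sum_(k < n) invmx (tsp_mx g rho theta x) a k *
    (nablaring g fv feta (fun k' b' y => thetastar g theta k' b' y + rho b' k' y) i k b x
     - 2^-1 * \sum_(l < n) rho b l x * Hup g H k l i x).

Definition phicoef g H fv feta rho theta (a b i : idx) (x : pt) : R :=
  \sum_(k < n) invmx (tsm_mx g rho theta x) a k *
    (nablaring g fv feta (fun k' b' y => rho b' k' y) i k b x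
     - \sum_(c < n) rho c k x * Tcoef g H fv feta rho theta c b i x).

Definition omegacoef g H fv feta rho theta (a b i : idx) (x : pt) : R :=
  GammaD g fv feta a b i x - phicoef g H fv feta rho theta a b i x
  + Tcoef g H fv feta rho theta a b i x.

Definition lie_metric (g : idx -> idx -> pt -> R) (v : idx -> pt -> R) (i j : idx) (x : pt) : R :=
  \sum_(k < n) (v k x * pd k (g i j) x + g k j x * pd i (v k) x + g i k x * pd j (v k) x).

Definition iota_g (g : idx -> idx -> pt -> R) (v : idx -> pt -> R) (j : idx) (x : pt) : R :=
  \sum_(k < n) g k j x * v k x.

End LocalGeometry.

(* Main.v *)
Require Import Defs.
From HB Require Import structures.
From mathcomp Require Import all_boot all_order all_algebra.
From mathcomp Require Import all_classical all_reals all_analysis.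
From mathcomp Require Import ring lra.
From mathcomp Require Import fingroup perm.
Set Implicit Arguments. Unset Strict Implicit. Unset Printing Implicit Defensive.
Import Order.TTheory GRing.Theory Num.Theory.
Import numFieldNormedType.Exports.
Local Open Scope classical_set_scope.
Local Open Scope ring_scope.

Section Analytic.
Context {R : realType} {n : nat}.
Local Notation pt := 'rV[R]_n.

Lemma der_bigsum (I : finType) (F : I -> pt -> R) x v :
  (forall i, derivable (F i) x v) -> derivable (fun y => \sum_i F i y) x v.
Proof.
move=> h; rewrite -fct_sumE; elim/big_ind: _ => //.
all: try (move=> f g; exact: derivableD).
all: try (have := @derivable_cst _ _ R^o (0:R) x v; exact).
Qed.

Lemma der_bigprod (I : finType) (F : I -> pt -> R) x v :
  (forall i, derivable (F i) x v) -> derivable (fun y => \prod_i F i y) x v.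
Proof.
move=> h; rewrite -fct_prodE; elim/big_ind: _ => //.
all: try (move=> f g; exact: derivableM).
all: try (have := @derivable_cst _ _ R^o (1:R) x v; exact).
Qed.

Lemma der_det m (M : pt -> 'M[R]_m) x v :
  (forall i j, derivable (fun y => M y i j) x v) ->
  derivable (fun y => \det (M y)) x v.
Proof.
move=> h; rewrite /determinant; apply: der_bigsum => s.
have := @derivableM _ _ (cst _) (fun y => \prod_i M y i (s i)) x v
  (derivable_cst _ _ _) (der_bigprod (fun i => h i (s i))).
exact.
Qed.

Lemma der_inv_entry m (M : pt -> 'M[R]_m) x v k l :
  (forall i j, derivable (fun y => M y i j) x v) ->
  (\forall y \near x, M y \in unitmx) ->
  derivable (fun y => invmx (M y) k l) x v.
Proof.
move=> h hu.
apply: (@near_eq_derivable _ _ _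
  (fun y => (\det (M y))^-1 * cofactor (M y) l k)).
  near=> y; rewrite /invmx (near hu y) // mxE mxE; by [].
have ux : M x \in unitmx by exact: (nbhs_singleton hu).
apply: derivableM.
  apply: derivableV; first by move: ux; rewrite unitmxE unitfE.
  exact: der_det.
rewrite /cofactor.
apply: (derivableM (derivable_cst _ _ _)).
apply: der_det => i j.
have -> : (fun y => row' l (col' k (M y)) i j) = (fun y => M y (lift l i) (lift k j)).
  by apply/funext => y; rewrite !mxE.
exact: h.
Unshelve. all: by end_near.
Qed.

Lemma pdD (i : 'I_n) (f h : pt -> R) x :
  derivable f x (delta_mx 0 i) -> derivable h x (delta_mx 0 i) ->
  pd i (fun y => f y + h y) x = pd i f x + pd i h x.
Proof. by move=> df dh; rewrite /pd (deriveD df dh). Qed.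

Lemma pdM (i : 'I_n) (f h : pt -> R) x :
  derivable f x (delta_mx 0 i) -> derivable h x (delta_mx 0 i) ->
  pd i (fun y => f y * h y) x = f x * pd i h x + h x * pd i f x.
Proof. by move=> df dh; rewrite /pd (deriveM df dh). Qed.

Lemma pd_sum m (i : 'I_n) (F : 'I_m -> pt -> R) x :
  (forall k, derivable (F k) x (delta_mx 0 i)) ->
  pd i (fun y => \sum_(k < m) F k y) x = \sum_(k < m) pd i (F k) x.
Proof. by move=> dF; rewrite /pd -fct_sumE derive_sum. Qed.

Lemma pd_near (i : 'I_n) (f h : pt -> R) x :
  (\forall y \near x, f y = h y) -> pd i f x = pd i h x.
Proof. by move=> e; rewrite /pd; apply: near_eq_derive. Qed.

End Analytic.
Section Alg.
Context {R : realType} {n : nat}.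
Local Notation pt := 'rV[R]_n.
Local Notation idx := 'I_n.

Lemma sum_delta (Y : idx -> R) j : \sum_(m < n) (j == m)%:R * Y m = Y j.
Proof.
rewrite (bigD1 j) //= eqxx mul1r big1 ?addr0 // => m.
by rewrite eq_sym => /negbTE ->; rewrite mul0r.
Qed.

Lemma contractS (a : idx -> R) (b : idx -> idx -> R) (Y : idx -> R) :
  \sum_(k < n) a k * (\sum_(m < n) b k m * Y m)
  = \sum_(m < n) (\sum_(k < n) a k * b k m) * Y m.
Proof.
under eq_bigr do rewrite big_distrr.
rewrite exchange_big /=; apply: eq_bigr => m _.
rewrite big_distrl /=; apply: eq_bigr => k _; by rewrite mulrA.
Qed.

Lemma inv_apply (M : 'M[R]_n) (X : idx -> R) k : M \in unitmx ->
  \sum_(c < n) M k c * (\sum_(k' < n) invmx M c k' * X k') = X k.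
Proof.
move=> uM; rewrite contractS.
transitivity (\sum_(m < n) (M *m invmx M) k m * X m).
  by apply: eq_bigr => m _; rewrite !mxE.
rewrite mulmxV //; under eq_bigr do rewrite mxE; exact: sum_delta.
Qed.

Lemma gsym U (g : idx -> idx -> pt -> R) x i j :
  riemannian_on U g -> U x -> g i j x = g j i x.
Proof. by case=> _ [hs _] Ux; rewrite hs. Qed.

Lemma G_unit U (g : idx -> idx -> pt -> R) x :
  riemannian_on U g -> U x -> gmx g x \in unitmx.
Proof.
move=> [_ [_ hp]] Ux; rewrite unitmxE unitfE; apply/negP => /det0P [v vn0 vG0].
have := hp x Ux v vn0.
suff -> : \sum_(i < n) \sum_(j < n) v 0 i * g i j x * v 0 j = 0 by rewrite ltxx.
rewrite exchange_big /=; apply: big1 => j _.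
rewrite -big_distrl /=.
suff -> : \sum_(i < n) v 0 i * g i j x = 0 by rewrite mul0r.
transitivity ((v *m gmx g x) 0 j); last by rewrite vG0 mxE.
rewrite !mxE; apply: eq_bigr => i _; by rewrite mxE.
Qed.

Lemma MC U (g : idx -> idx -> pt -> R) x j m :
  riemannian_on U g -> U x ->
  \sum_(k < n) g j k x * ginv g k m x = (j == m)%:R.
Proof.
move=> hg Ux.
transitivity ((gmx g x *m invmx (gmx g x)) j m).
  by rewrite !mxE; apply: eq_bigr => k _; rewrite mxE.
by rewrite mulmxV ?mxE // (G_unit hg Ux).
Qed.

Lemma MC2 U (g : idx -> idx -> pt -> R) x j m :
  riemannian_on U g -> U x ->
  \sum_(k < n) g k j x * ginv g k m x = (j == m)%:R.
Proof.
move=> hg Ux; rewrite -(MC j m hg Ux); apply: eq_bigr => k _; by rewrite (gsym _ _ hg Ux).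
Qed.

Lemma pm_unit U (g : idx -> idx -> pt -> R) (rho theta : idx -> idx -> pt -> R)
    x (s : R) (M : 'M[R]_n) :
  riemannian_on U g -> U x ->
  (forall c : idx -> R,
      (forall i, \sum_(a < n) c a * rho a i x = 0) ->
      (forall i, \sum_(a < n) c a * theta a i x = 0) -> forall a, c a = 0) ->
  (forall a b, \sum_(i < n) (rho a i x * theta b i x + rho b i x * theta a i x) = 0) ->
  s * s = 1 ->
  (forall k a, M k a = thetastar g theta k a x + s * rho a k x) ->
  M \in unitmx.
Proof.
move=> hg Ux hind hiso hs HM.
rewrite -unitmx_tr unitmxE unitfE; apply/negP => /det0P [v vn0 vM0].
pose c a := v 0 a.
have hk : forall k, \sum_(a < n) c a * M k a = 0.
  move=> k; transitivity ((v *m M^T) 0 k); last by rewrite vM0 mxE.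
  by rewrite !mxE; apply: eq_bigr => a _; rewrite mxE.
pose w k := \sum_(a < n) c a * rho a k x.
pose xi j := \sum_(a < n) c a * theta a j x.
have h1 : forall k, \sum_(j < n) ginv g k j x * xi j + s * w k = 0.
  move=> k; rewrite -[RHS](hk k) /w /xi big_distrr /=.
  under eq_bigr do rewrite big_distrr /=.
  rewrite exchange_big -big_split /=; apply: eq_bigr => a _.
  rewrite HM /thetastar mulrDr big_distrr /=; congr (_ + _).
    by apply: eq_bigr => j _; ring.
  by ring.
have h2 : forall m, \sum_(k < n) g m k x * w k = - s * xi m.
  move=> m.
  have e : forall k, w k = - s * \sum_(j < n) ginv g k j x * xi j.
    move=> k; rewrite -[w k]mul1r -hs -mulrA.
    move/eqP: (h1 k); rewrite addrC addr_eq0 => /eqP ->; by ring.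
  under eq_bigr do rewrite e.
  transitivity (- s * \sum_(k < n) g m k x * (\sum_(j < n) ginv g k j x * xi j)).
    by rewrite big_distrr /=; apply: eq_bigr => k _; ring.
  by rewrite contractS; under eq_bigr do rewrite (MC _ _ hg Ux); rewrite sum_delta.
have iso : \sum_(k < n) w k * xi k = 0.
  pose Q a b := \sum_(k < n) rho a k x * theta b k x.
  have S1 : \sum_(k < n) w k * xi k = \sum_(a < n) \sum_(b < n) c a * c b * Q a b.
    rewrite /w /xi /Q.
    under eq_bigr do rewrite big_distrl /=.
    rewrite exchange_big /=; apply: eq_bigr => a _.
    under eq_bigr do rewrite big_distrr /=.
    rewrite exchange_big /=; apply: eq_bigr => b _.
    rewrite big_distrr /=; apply: eq_bigr => k _; ring.
  have S2 : \sum_(a < n) \sum_(b < n) c a * c b * Q a b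
      = \sum_(a < n) \sum_(b < n) c a * c b * Q b a.
    rewrite exchange_big /=; apply: eq_bigr => a _; apply: eq_bigr => b _; ring.
  have S3 : \sum_(a < n) \sum_(b < n) c a * c b * Q a b
      + \sum_(a < n) \sum_(b < n) c a * c b * Q b a = 0.
    rewrite -big_split /=; apply: big1 => a _.
    rewrite -big_split /=; apply: big1 => b _.
    rewrite -mulrDr /Q -big_split /=.
    by rewrite (hiso a b) mulr0.
  by rewrite S1; move: S3; rewrite -S2; lra.
have w0 : forall k, w k = 0.
  have hq : \sum_(i < n) \sum_(j < n) w i * g i j x * w j = 0.
    transitivity (\sum_(i < n) w i * (- s * xi i)).
      apply: eq_bigr => i _; rewrite -h2 big_distrr /=.
      by apply: eq_bigr => j _; ring.
    transitivity (- s * \sum_(k < n) w k * xi k); last by rewrite iso mulr0.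
    rewrite big_distrr /=; apply: eq_bigr => i _; ring.
  case: (boolP ((\row_k w k) == 0)) => [/eqP e k|ne].
    by have := congr1 (fun A : 'M[R]_(1,n) => A 0 k) e; rewrite !mxE.
  have := (proj2 (proj2 hg)) x Ux _ ne.
  under eq_bigr do under eq_bigr do rewrite !mxE.
  by rewrite hq ltxx.
have xi0 : forall m, xi m = 0.
  move=> m; have := h2 m; under eq_bigr do rewrite w0 mulr0.
  rewrite big1 // => /esym /eqP; rewrite mulf_eq0 oppr_eq0 => /orP [/eqP s0|/eqP //].
  by move: hs; rewrite s0 mul0r => /eqP; rewrite eq_sym oner_eq0.
have c0 := hind c w0 xi0.
move/eqP: vn0; apply; apply/rowP => a; rewrite !mxE; exact: c0.
Qed.

End Alg.
Section Main.
Context {R : realType} {n : nat} (U : set 'rV[R]_n)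
    (g : 'I_n -> 'I_n -> 'rV[R]_n -> R)
    (H : 'I_n -> 'I_n -> 'I_n -> 'rV[R]_n -> R)
    (fv feta rho theta : 'I_n -> 'I_n -> 'rV[R]_n -> R)
    (hU : open U) (hg : riemannian_on U g) (hH : closed_three_form_on U H)
    (hD2 : dirac_frame U H rho theta).
Local Notation pt := 'rV[R]_n.
Local Notation idx := 'I_n.
Local Notation ts k b x := (thetastar g theta k b x).
Local Notation Chr := (christoffel g).
Local Notation GD := (GammaD g fv feta).
Local Notation Tc := (Tcoef g H fv feta rho theta).
Local Notation ph := (phicoef g H fv feta rho theta).
Local Notation om := (omegacoef g H fv feta rho theta).
Local Notation ei i := (delta_mx 0 i : 'rV[R]_n).

Lemma nearU x : U x -> \forall y \near x, U y.
Proof. by move=> Ux; apply: open_nbhs_nbhs. Qed.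

Lemma units x : U x -> tsp_mx g rho theta x \in unitmx /\ tsm_mx g rho theta x \in unitmx.
Proof.
move=> Ux; case: hD2 => _ [hind [hiso _]]; split.
  apply: (@pm_unit _ _ U g rho theta x 1 _ hg Ux (hind x Ux) (hiso x Ux)).
    by rewrite mulr1.
  by move=> k a; rewrite mxE mul1r.
apply: (@pm_unit _ _ U g rho theta x (-1) _ hg Ux (hind x Ux) (hiso x Ux)).
  by rewrite mulrNN mulr1.
by move=> k a; rewrite mxE mulN1r.
Qed.

Lemma dgv x i a b : U x -> derivable (g a b) x (ei i).
Proof. by move=> Ux; apply: diff_derivable; exact: (proj1 hg a b [::] x Ux). Qed.
Lemma drv x i a b : U x -> derivable (rho a b) x (ei i).
Proof. by move=> Ux; apply: diff_derivable; exact: (proj1 (proj1 hD2 a b) [::] x Ux). Qed.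
Lemma dtv x i a b : U x -> derivable (theta a b) x (ei i).
Proof. by move=> Ux; apply: diff_derivable; exact: (proj2 (proj1 hD2 a b) [::] x Ux). Qed.

Lemma dginv x i k l : U x -> derivable (ginv g k l) x (ei i).
Proof.
move=> Ux; apply: (@der_inv_entry _ _ _ (gmx g)).
  move=> a b; have -> : (fun y => gmx g y a b) = g a b by apply/funext => y; rewrite mxE.
  exact: dgv.
by near=> y; apply: (G_unit hg); near: y; exact: nearU.
Unshelve. all: by end_near.
Qed.

Lemma dtsv x i k b : U x -> derivable (thetastar g theta k b) x (ei i).
Proof.
move=> Ux; apply: (@der_bigsum _ _ _ (fun j y => ginv g k j y * theta b j y)) => j.
by apply: derivableM; [exact: dginv | exact: dtv].
Qed.

Lemma dgs x i a b : U x -> pd i (g a b) x = pd i (g b a) x.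
Proof.
move=> Ux; apply: pd_near; near=> y; apply: (gsym _ _ hg); near: y; exact: nearU.
Unshelve. all: by end_near.
Qed.

Lemma E1 x i k b : U x ->
  pd i (rho b k) x + \sum_(l < n) Chr k i l x * rho b l x
  = \sum_(c < n) rho c k x * om c b i x + \sum_(c < n) ts k c x * ph c b i x.
Proof.
move=> Ux.
have K2 : \sum_(c < n) (ts k c x - rho c k x) * ph c b i x
   = nablaring g fv feta (fun k' b' y => rho b' k' y) i k b x
     - \sum_(c < n) rho c k x * Tc c b i x.
  rewrite -[RHS](@inv_apply _ _ (tsm_mx g rho theta x)
     (fun k' => nablaring g fv feta (fun k' b' y => rho b' k' y) i k' b x
       - \sum_(c < n) rho c k' x * Tc c b i x) k (proj2 (units Ux))).
  by apply: eq_bigr => c _; rewrite mxE.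
have e : \sum_(c < n) rho c k x * om c b i x + \sum_(c < n) ts k c x * ph c b i x
   = \sum_(c < n) GD c b i x * rho c k x + \sum_(c < n) rho c k x * Tc c b i x
     + \sum_(c < n) (ts k c x - rho c k x) * ph c b i x.
  by rewrite -!big_split /=; apply: eq_bigr => c _; rewrite /omegacoef; ring.
rewrite e K2 /nablaring /=; ring.
Qed.

Lemma E2 x i k b : U x ->
  pd i (thetastar g theta k b) x + \sum_(l < n) Chr k i l x * ts l b x
  = \sum_(c < n) ts k c x * om c b i x + \sum_(c < n) rho c k x * ph c b i x
    + 2^-1 * \sum_(l < n) rho b l x * Hup g H k l i x.
Proof.
move=> Ux.
have K1 : \sum_(c < n) (ts k c x + rho c k x) * Tc c b i x
   = nablaring g fv feta (fun k' b' y => thetastar g theta k' b' y + rho b' k' y) i k b x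
     - 2^-1 * \sum_(l < n) rho b l x * Hup g H k l i x.
  rewrite -[RHS](@inv_apply _ _ (tsp_mx g rho theta x)
     (fun k' => nablaring g fv feta (fun k' b' y => thetastar g theta k' b' y + rho b' k' y) i k' b x
       - 2^-1 * \sum_(l < n) rho b l x * Hup g H k' l i x) k (proj1 (units Ux))).
  by apply: eq_bigr => c _; rewrite mxE.
have e1 := E1 i k b Ux.
have e : \sum_(c < n) ts k c x * om c b i x + \sum_(c < n) rho c k x * ph c b i x
   + (\sum_(c < n) rho c k x * om c b i x + \sum_(c < n) ts k c x * ph c b i x)
   = \sum_(c < n) (ts k c x + rho c k x) * Tc c b i x
     + \sum_(c < n) GD c b i x * (ts k c x + rho c k x).
  by rewrite -!big_split /=; apply: eq_bigr => c _; rewrite /omegacoef; ring.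
have e2 : \sum_(l < n) Chr k i l x * (ts l b x + rho b l x)
   = \sum_(l < n) Chr k i l x * ts l b x + \sum_(l < n) Chr k i l x * rho b l x.
  by rewrite -big_split /=; apply: eq_bigr => l _; ring.
move: K1; rewrite /nablaring /= pdD; [|exact: dtsv|exact: drv].
rewrite e2 => K1.
lra.
Qed.

Lemma gChr x j i l : U x ->
  \sum_(k < n) g k j x * Chr k i l x
  = 2^-1 * (pd i (g j l) x + pd l (g j i) x - pd j (g i l) x).
Proof.
move=> Ux; rewrite /christoffel.
transitivity (2^-1 * \sum_(k < n) g k j x * (\sum_(m < n) ginv g k m x *
   (pd i (g m l) x + pd l (g m i) x - pd m (g i l) x))).
  by rewrite big_distrr /=; apply: eq_bigr => k _; ring.
by rewrite contractS; under eq_bigr do rewrite (MC2 _ _ hg Ux); rewrite sum_delta.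
Qed.

Lemma gChr' x j i l : U x ->
  \sum_(k < n) g j k x * Chr k i l x
  = 2^-1 * (pd i (g j l) x + pd l (g j i) x - pd j (g i l) x).
Proof.
move=> Ux; rewrite -gChr //; apply: eq_bigr => k _; by rewrite (gsym _ _ hg Ux).
Qed.

Lemma gts' x j c : U x -> \sum_(k < n) g j k x * ts k c x = theta c j x.
Proof.
move=> Ux; rewrite /thetastar contractS.
by under eq_bigr do rewrite (MC _ _ hg Ux); rewrite sum_delta.
Qed.

Lemma gts x j c : U x -> \sum_(k < n) g k j x * ts k c x = theta c j x.
Proof.
move=> Ux; rewrite -(gts' j c Ux); apply: eq_bigr => k _; by rewrite (gsym _ _ hg Ux).
Qed.

Lemma gHup x j l i : U x -> \sum_(k < n) g j k x * Hup g H k l i x = H j l i x.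
Proof.
move=> Ux; rewrite /Hup contractS.
by under eq_bigr do rewrite (MC _ _ hg Ux); rewrite sum_delta.
Qed.

Lemma dtheta x i a j : U x ->
  pd i (theta a j) x = \sum_(k < n) (pd i (g j k) x * ts k a x
                                     + g j k x * pd i (thetastar g theta k a) x).
Proof.
move=> Ux.
rewrite (@pd_near _ _ i _ (fun y => \sum_(k < n) g j k y * thetastar g theta k a y)).
  rewrite pd_sum; last first.
    by move=> k; apply: derivableM; [exact: dgv | exact: dtsv].
  apply: eq_bigr => k _; rewrite pdM; [ring|exact: dgv|exact: dtsv].
near=> y; rewrite gts' //; near: y; exact: nearU.
Unshelve. all: by end_near.
Qed.

Lemma contractT (A : idx -> R) (B : idx -> idx -> R) (Y : idx -> R) :
  \sum_(k < n) A k * (\sum_(m < n) Y m * B k m)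
  = \sum_(m < n) Y m * (\sum_(k < n) A k * B k m).
Proof.
under eq_bigr do rewrite big_distrr.
rewrite exchange_big /=; apply: eq_bigr => m _.
rewrite big_distrr /=; apply: eq_bigr => k _; ring.
Qed.

Lemma L1 x a i j : U x ->
  \sum_(k < n) g k j x * pd i (rho a k) x
  = \sum_(c < n) om c a i x * iota_g g (rho c) j x
    + \sum_(c < n) ph c a i x * theta c j x
    - \sum_(l < n) (2^-1 * (pd i (g j l) x + pd l (g j i) x - pd j (g i l) x)) * rho a l x.
Proof.
move=> Ux.
have e : forall k, pd i (rho a k) x
   = (\sum_(c < n) rho c k x * om c a i x + \sum_(c < n) ts k c x * ph c a i x)
     - \sum_(l < n) Chr k i l x * rho a l x.
  by move=> k; rewrite -(E1 i k a Ux); ring.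
under eq_bigr do rewrite e.
transitivity (\sum_(k < n) g k j x * (\sum_(c < n) rho c k x * om c a i x)
   + \sum_(k < n) g k j x * (\sum_(c < n) ts k c x * ph c a i x)
   - \sum_(k < n) g k j x * (\sum_(l < n) Chr k i l x * rho a l x)).
  by rewrite -big_split -sumrB /=; apply: eq_bigr => k _; ring.
rewrite (contractS (fun k => g k j x) (fun k c => rho c k x) (fun c => om c a i x)).
rewrite (contractS (fun k => g k j x) (fun k c => ts k c x) (fun c => ph c a i x)).
rewrite (contractS (fun k => g k j x) (fun k l => Chr k i l x) (fun l => rho a l x)).
congr (_ + _ - _).
- by apply: eq_bigr => c _; rewrite mulrC.
- by apply: eq_bigr => c _; rewrite gts // mulrC.
- by apply: eq_bigr => l _; rewrite gChr.
Qed.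

Lemma Id1 x a i j : U x ->
  lie_metric g (rho a) i j x =
       \sum_(b < n) (om b a i x * iota_g g (rho b) j x
                     + iota_g g (rho b) i x * om b a j x)
     + \sum_(b < n) (ph b a i x * theta b j x
                     + theta b i x * ph b a j x).
Proof.
move=> Ux; rewrite /lie_metric.
have sp : \sum_(k < n) (rho a k x * pd k (g i j) x + g k j x * pd i (rho a k) x
                        + g i k x * pd j (rho a k) x)
   = \sum_(k < n) rho a k x * pd k (g i j) x + \sum_(k < n) g k j x * pd i (rho a k) x
     + \sum_(k < n) g k i x * pd j (rho a k) x.
  by rewrite -!big_split /=; apply: eq_bigr => k _; rewrite (gsym i k hg Ux).
have Z : \sum_(k < n) rho a k x * pd k (g i j) x
   = \sum_(l < n) (2^-1 * (pd i (g j l) x + pd l (g j i) x - pd j (g i l) x)) * rho a l x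
   + \sum_(l < n) (2^-1 * (pd j (g i l) x + pd l (g i j) x - pd i (g j l) x)) * rho a l x.
  by rewrite -big_split /=; apply: eq_bigr => l _; rewrite (dgs l j i Ux); field.
have R1 : \sum_(b < n) (om b a i x * iota_g g (rho b) j x
                     + iota_g g (rho b) i x * om b a j x)
     + \sum_(b < n) (ph b a i x * theta b j x
                     + theta b i x * ph b a j x)
   = \sum_(c < n) om c a i x * iota_g g (rho c) j x
    + \sum_(c < n) ph c a i x * theta c j x
    + (\sum_(c < n) om c a j x * iota_g g (rho c) i x
    + \sum_(c < n) ph c a j x * theta c i x).
  by rewrite -!big_split /=; apply: eq_bigr => b _; ring.
rewrite sp R1 (L1 a i j Ux) (L1 a j i Ux) Z; ring.
Qed.

Lemma M1 x a i j : U x ->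
  \sum_(k < n) g j k x * pd i (thetastar g theta k a) x
  = \sum_(c < n) om c a i x * theta c j x
    + \sum_(c < n) ph c a i x * iota_g g (rho c) j x
    + 2^-1 * \sum_(l < n) rho a l x * H j l i x
    - \sum_(l < n) (2^-1 * (pd i (g j l) x + pd l (g j i) x - pd j (g i l) x)) * ts l a x.
Proof.
move=> Ux.
have e : forall k, pd i (thetastar g theta k a) x
   = (\sum_(c < n) ts k c x * om c a i x + \sum_(c < n) rho c k x * ph c a i x
      + 2^-1 * \sum_(l < n) rho a l x * Hup g H k l i x)
     - \sum_(l < n) Chr k i l x * ts l a x.
  by move=> k; rewrite -(E2 i k a Ux); ring.
under eq_bigr do rewrite e.
transitivity (\sum_(k < n) g j k x * (\sum_(c < n) ts k c x * om c a i x)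
   + \sum_(k < n) g j k x * (\sum_(c < n) rho c k x * ph c a i x)
   + 2^-1 * \sum_(k < n) g j k x * (\sum_(l < n) rho a l x * Hup g H k l i x)
   - \sum_(k < n) g j k x * (\sum_(l < n) Chr k i l x * ts l a x)).
  have -> : 2^-1 * \sum_(k < n) g j k x * (\sum_(l < n) rho a l x * Hup g H k l i x)
     = \sum_(k < n) 2^-1 * (g j k x * (\sum_(l < n) rho a l x * Hup g H k l i x)).
    by rewrite big_distrr.
  rewrite -!big_split -sumrB /=; apply: eq_bigr => k _; ring.
rewrite (contractS (fun k => g j k x) (fun k c => ts k c x) (fun c => om c a i x)).
rewrite (contractS (fun k => g j k x) (fun k c => rho c k x) (fun c => ph c a i x)).
rewrite (contractT (fun k => g j k x) (fun k l => Hup g H k l i x) (fun l => rho a l x)).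
rewrite (contractS (fun k => g j k x) (fun k l => Chr k i l x) (fun l => ts l a x)).
congr (_ + _ + 2^-1 * _ - _).
- by apply: eq_bigr => c _; rewrite gts' // mulrC.
- apply: eq_bigr => c _; rewrite mulrC /iota_g; congr (_ * _).
  by apply: eq_bigr => k _; rewrite (gsym j k hg Ux).
- by apply: eq_bigr => l _; rewrite gHup.
- by apply: eq_bigr => l _; rewrite gChr'.
Qed.

Lemma Id2 x a i j : U x ->
     \sum_(k < n) rho a k x * H k i j x =
       (pd i (theta a j) x - pd j (theta a i) x)
     - \sum_(b < n) (om b a i x * theta b j x
                     - theta b i x * om b a j x)
     - \sum_(b < n) (ph b a i x * iota_g g (rho b) j x
                     - iota_g g (rho b) i x * ph b a j x).
Proof.
move=> Ux.
have sp : forall i j, pd i (theta a j) x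
   = \sum_(k < n) pd i (g j k) x * ts k a x
     + \sum_(k < n) g j k x * pd i (thetastar g theta k a) x.
  by move=> i' j'; rewrite (dtheta i' a j' Ux) big_split.
have Z : \sum_(k < n) pd i (g j k) x * ts k a x
   + \sum_(l < n) (2^-1 * (pd j (g i l) x + pd l (g i j) x - pd i (g j l) x)) * ts l a x
   = \sum_(l < n) (2^-1 * (pd i (g j l) x + pd l (g j i) x - pd j (g i l) x)) * ts l a x
   + \sum_(k < n) pd j (g i k) x * ts k a x.
  by rewrite -!big_split /=; apply: eq_bigr => l _; rewrite (dgs l j i Ux); field.
have [_ [h1 [h2 _]]] := hH.
have HZ : \sum_(k < n) rho a k x * H k i j x
   = 2^-1 * \sum_(l < n) rho a l x * H j l i x - 2^-1 * \sum_(l < n) rho a l x * H i l j x.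
  rewrite !big_distrr -sumrB /=; apply: eq_bigr => l _.
  by rewrite (h1 x Ux j l i) (h2 x Ux l j i) (h1 x Ux i l j); field.
have R2 : \sum_(b < n) (om b a i x * theta b j x - theta b i x * om b a j x)
   = \sum_(c < n) om c a i x * theta c j x - \sum_(c < n) om c a j x * theta c i x.
  by rewrite -sumrB; apply: eq_bigr => b _; ring.
have R3 : \sum_(b < n) (ph b a i x * iota_g g (rho b) j x - iota_g g (rho b) i x * ph b a j x)
   = \sum_(c < n) ph c a i x * iota_g g (rho c) j x - \sum_(c < n) ph c a j x * iota_g g (rho c) i x.
  by rewrite -sumrB; apply: eq_bigr => b _; ring.
rewrite R2 R3 HZ (sp i j) (sp j i) (M1 a i j Ux) (M1 a j i Ux).
move: Z; lra.
Qed.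

End Main.
Unset Implicit Arguments.
Theorem mainTheorem1 (R : realType) (n : nat) (U : set 'rV[R]_n)
    (g : 'I_n -> 'I_n -> 'rV[R]_n -> R)
    (H : 'I_n -> 'I_n -> 'I_n -> 'rV[R]_n -> R)
    (fv feta rho theta : 'I_n -> 'I_n -> 'rV[R]_n -> R) :
  open U ->
  riemannian_on U g ->
  closed_three_form_on U H ->
  dirac_frame U H fv feta ->
  dirac_frame U H rho theta ->
  (forall x, U x -> tsp_mx g rho theta x \in unitmx /\ tsm_mx g rho theta x \in unitmx) /\
  (forall (a : 'I_n) (x : 'rV[R]_n), U x -> forall i j : 'I_n,
     lie_metric g (rho a) i j x =
       \sum_(b < n) (omegacoef g H fv feta rho theta b a i x * iota_g g (rho b) j x
                     + iota_g g (rho b) i x * omegacoef g H fv feta rho theta b a j x)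
     + \sum_(b < n) (phicoef g H fv feta rho theta b a i x * theta b j x
                     + theta b i x * phicoef g H fv feta rho theta b a j x)
   /\
     \sum_(k < n) rho a k x * H k i j x =
       (pd i (theta a j) x - pd j (theta a i) x)
     - \sum_(b < n) (omegacoef g H fv feta rho theta b a i x * theta b j x
                     - theta b i x * omegacoef g H fv feta rho theta b a j x)
     - \sum_(b < n) (phicoef g H fv feta rho theta b a i x * iota_g g (rho b) j x
                     - iota_g g (rho b) i x * phicoef g H fv feta rho theta b a j x)).
Proof.
move=> hU hg hH hD1 hD2; split.
  by move=> x Ux; exact: (units hg hD2 Ux).
move=> a x Ux i j; split.
  exact: (Id1 fv feta hU hg hD2 a i j Ux).
exact: (Id2 fv feta hU hg hH hD2 a i j Ux).
Qed.
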